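(* Let $z_1,\dots,z_n$ be distinct integers, let $t$ be an integer, and let $w$ be a positive integer with $w<n$. Let $M_w\in\mathbb{Z}^{(w+1)\times(n+1)}$ have rows indexed by $r=0,1,\dots,w$ and columns by $j=1,\dots,n+1$, with entries $(M_w)_{r,j}=z_j^r$ for $1\le j\le n$, and last column given by $(M_w)_{r,n+1}=0$ for $r\le w-2$, $(M_w)_{w-1,n+1}=1$, $(M_w)_{w,n+1}=t$. Then $M_w$ has a null vector (a nonzero rational vector $v$ with $M_wv=0$) of Hamming weight $w+1$ if and only if $z_{i_1}+z_{i_2}+\cdots+z_{i_w}=t$ for some indices $i_1<i_2<\cdots<i_w$.
   Context: The Hamming weight of a vector is its number of nonzero coordinates. *)

(* Defs.v *)
From HB Require Import structures.
From mathcomp Require Import all_boot all_order all_algebra.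
Set Implicit Arguments. Unset Strict Implicit. Unset Printing Implicit Defensive.
Import Order.TTheory GRing.Theory Num.Theory.
Local Open Scope ring_scope.

Definition hamming_weight (R : nzRingType) (m : nat) (v : 'cV[R]_m) : nat :=
  #|[set i : 'I_m | v i 0 != 0]|.

(* The matrix M_w (over rat), rows r = 0..w, columns j = 1..n (0-indexed here
   as 0..n-1, via lshift) followed by the extra last column (rshift). *)
Definition Mw (n w : nat) (z : 'I_n -> int) (t : int) : 'M[rat]_(w.+1, n + 1) :=
  row_mx (\matrix_(r < w.+1, j < n) ((z j)%:~R ^+ r))
         (\col_(r < w.+1) (if (r : nat) == w.-1 then 1
                            else if (r : nat) == w then t%:~R else 0)).

(* Main.v *)
Require Import Defs.
From HB Require Import structures.
From mathcomp Require Import all_boot all_order all_algebra.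
From mathcomp Require Import ring lra zify.
Import Order.TTheory GRing.Theory Num.Theory.
Local Open Scope ring_scope.

Lemma Mv_entry (n w : nat) (z : 'I_n -> int) (t : int) (v : 'cV[rat]_(n + 1)) (r : 'I_w.+1) :
  (@Mw n w z t *m v) r 0 = \sum_(j < n) (z j)%:~R ^+ r * v (lshift 1 j) 0 +
    (if (r : nat) == w.-1 then 1 else if (r : nat) == w then t%:~R else 0) * v (rshift n ord0) 0.
Proof.
rewrite mxE big_split_ord /= big_ord1; congr (_ + _).
  by apply: eq_bigr => j _; rewrite row_mxEl mxE.
by rewrite row_mxEr mxE.
Qed.

Lemma weightE (n : nat) (v : 'cV[rat]_(n + 1)) :
  hamming_weight v = addn #|[set j : 'I_n | v (lshift 1 j) 0 != 0]| (v (rshift n ord0) 0 != 0).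
Proof.
rewrite /hamming_weight -!sum1_card !big_mkcond big_split_ord /= big_ord1.
congr (_ + _)%N; first by rewrite [RHS]big_mkcond; apply: eq_bigr => i _; rewrite !inE.
by rewrite inE; case: (_ != 0).
Qed.

Lemma prod_enum (n : nat) (Z : 'I_n -> rat) (S : {set 'I_n}) :
  \prod_(i in S) ('X - (Z i)%:P) = \prod_(a <- [seq Z i | i <- enum S]) ('X - a%:P).
Proof. by rewrite big_map big_enum. Qed.

Lemma size_prodS (n : nat) (Z : 'I_n -> rat) (S : {set 'I_n}) :
  size (\prod_(i in S) ('X - (Z i)%:P)) = #|S|.+1.
Proof. by rewrite prod_enum size_prod_XsubC size_map cardE. Qed.

Lemma coefS (n : nat) (Z : 'I_n -> rat) (S : {set 'I_n}) : (0 < #|S|)%N ->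
  (\prod_(i in S) ('X - (Z i)%:P))`_(#|S|.-1) = - \sum_(i in S) Z i.
Proof.
move=> S0; rewrite prod_enum cardE -(size_map Z) coefPn_prod_XsubC.
  by rewrite big_map big_enum.
by rewrite size_map -cardE -lt0n.
Qed.

Lemma lcS (n : nat) (Z : 'I_n -> rat) (S : {set 'I_n}) :
  (\prod_(i in S) ('X - (Z i)%:P))`_#|S| = 1.
Proof.
have := lead_coef_prod_XsubC (index_enum 'I_n) (fun i => i \in S) Z.
by rewrite /lead_coef size_prodS.
Qed.

Lemma lag (n : nat) (Z : 'I_n -> rat) (hZ : injective Z) (S : {set 'I_n}) (p : {poly rat}) :
  (size p <= #|S|)%N ->
  p`_(#|S|.-1) = \sum_(j in S) p.[Z j] / \prod_(i in S :\ j) (Z j - Z i).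
Proof.
move=> sp.
set d := fun j => \prod_(i in S :\ j) (Z j - Z i).
have dn0 : forall j, d j != 0.
  move=> j; apply/prodf_neq0 => i; rewrite in_setD1 => /andP[ij _].
  by rewrite subr_eq0; apply/eqP => /hZ /eqP; rewrite eq_sym (negbTE ij).
set P := \sum_(j in S) (p.[Z j] / d j) *: \prod_(i in S :\ j) ('X - (Z i)%:P).
have sP : (size P <= #|S|)%N.
  rewrite /P; apply: (leq_trans (size_sum _ _ _)); apply/bigmax_leqP => j jS.
  apply: (leq_trans (size_scale_leq _ _)).
  by rewrite size_prodS (cardsD1 j S) jS.
have PE : P = p.
  apply/eqP; rewrite -subr_eq0; apply/negPn/negP => nz.
  have := max_poly_roots nz (rs := [seq Z i | i <- enum S]).
  rewrite size_map -cardE.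
  have -> : all (root (P - p)) [seq Z i | i <- enum S].
    apply/allP => x /mapP[k]; rewrite mem_enum => kS ->.
    rewrite /root hornerD hornerN /P horner_sum (bigD1 k) //= [X in _ + X - _]big1; last first.
      move=> j /andP[jS jk]; rewrite hornerZ horner_prod (bigD1 k) /=; last first.
        by rewrite in_setD1 eq_sym jk.
      by rewrite hornerXsubC subrr mul0r mulr0.
    rewrite hornerZ horner_prod.
    under eq_bigr => i _ do rewrite hornerXsubC.
    by rewrite -/(d k) addr0 mulfVK // subrr.
  rewrite map_inj_uniq ?enum_uniq // => /(_ isT isT) H.
  have H2 : (size (P - p)%R <= #|S|)%N.
    by apply: (leq_trans (size_polyD _ _)); rewrite size_polyN geq_max sP sp.
  by have := leq_ltn_trans H2 H; rewrite ltnn.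
rewrite -{1}PE /P coef_sum; apply: eq_bigr => j jS.
rewrite coefZ.
have -> : (#|S|.-1) = #|S :\ j| by rewrite (cardsD1 j S) jS.
by rewrite lcS mulr1.
Qed.

Theorem lemma2p6 (n : nat) (z : 'I_n -> int) (t : int) (w : nat)
  (hz : injective z) (hw0 : (0 < w)%N) (hwn : (w < n)%N) :
  (exists v : 'cV[rat]_(n + 1),
      [/\ v != 0, @Mw n w z t *m v = 0 & hamming_weight v = w.+1])
  <-> (exists S : {set 'I_n}, #|S| = w /\ \sum_(i in S) z i = t).
Proof.
case: w hw0 hwn => [//|k] _ hkn.
pose Z : 'I_n -> rat := fun j => (z j)%:~R.
have hZ : injective Z by move=> i j /intr_inj /hz.
pose c : nat -> rat := fun r => if r == k then 1 else if r == k.+1 then t%:~R else 0.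
split.
  move=> [v [vn0 /matrixP Mv0 hw]].
  pose x := fun j => v (lshift 1 j) 0.
  pose y := v (rshift n ord0) 0.
  have eqr : forall r : 'I_k.+2, \sum_(j < n) Z j ^+ r * x j + c r * y = 0.
    move=> r; have := Mv0 r 0; rewrite Mv_entry mxE => H; exact: H.
  pose L p := \sum_(j < n) x j * p.[Z j].
  have Lcoef : forall p : {poly rat}, (size p <= k.+2)%N ->
      L p = - y * (p`_k + t%:~R * p`_k.+1).
    move=> p sp; rewrite /L.
    under eq_bigr => j _ do rewrite (horner_coef_wide _ sp) mulr_sumr.
    rewrite exchange_big /=.
    transitivity (\sum_(r < k.+2) p`_r * (- (c r * y))).
      apply: eq_bigr => r _.
      have <- : \sum_(j < n) Z j ^+ r * x j = - (c r * y).
        by apply/eqP; rewrite -addr_eq0; apply/eqP; exact: eqr.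
      rewrite mulr_sumr; apply: eq_bigr => j _.
      by rewrite mulrCA [x j * _]mulrC.
    rewrite !big_ord_recr /= big1 ?add0r; last first.
      by move=> i _; rewrite /c /= ltn_eqF // ltn_eqF ?mulr0 ?mul0r ?oppr0 ?mulr0 // ltnS ltnW.
    rewrite /c eqxx gtn_eqF // eqxx.
    ring.
  pose S := [set j : 'I_n | x j != 0].
  have xS : forall j, j \notin S -> x j = 0 by move=> j; rewrite inE negbK => /eqP.
  have hS : addn #|S| (y != 0) = k.+2 by rewrite -hw weightE.
  case: (eqVneq y 0) => [y0|yn0].
    rewrite y0 eqxx addn0 in hS.
    have [j0 j0S] : exists j0, j0 \in S by apply/set0Pn; rewrite -card_gt0 hS.
    pose p := \prod_(i in S :\ j0) ('X - (Z i)%:P).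
    have cS : #|S :\ j0| = k.+1 by move: (cardsD1 j0 S); rewrite j0S /= hS; lia.
    have sp : size p = k.+2 by rewrite size_prodS cS.
    have := Lcoef p; rewrite sp leqnn y0 oppr0 mul0r => /(_ isT).
    rewrite /L (bigD1 j0) //= big1 ?addr0; last first.
      move=> j jj0; case: (boolP (j \in S)) => jS; last by rewrite xS // mul0r.
      rewrite horner_prod (bigD1 j) /=; last by rewrite in_setD1 jj0.
      by rewrite hornerXsubC subrr mul0r mulr0.
    move/eqP; rewrite mulf_eq0 => /orP[|].
      by move: j0S; rewrite inE => /negbTE ->.
    rewrite horner_prod => H; exfalso; move: H; apply/negP; apply/prodf_neq0 => i; rewrite in_setD1 => /andP[ij _].
    rewrite hornerXsubC subr_eq0; apply/eqP => /hZ /eqP; rewrite eq_sym (negbTE ij) //.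
  rewrite yn0 /= in hS.
  have cS : #|S| = k.+1 by move: hS; rewrite addn1 => -[].
  pose q := \prod_(i in S) ('X - (Z i)%:P).
  have := Lcoef q; rewrite size_prodS cS leqnn => /(_ isT).
  rewrite /L big1; last first.
    move=> j _; case: (boolP (j \in S)) => jS; last by rewrite xS // mul0r.
    rewrite horner_prod (bigD1 j) //=.
    by rewrite hornerXsubC subrr mul0r mulr0.
  have := lcS _ Z S; rewrite cS => ->.
  have := coefS _ Z S; rewrite cS => /(_ isT) /= ->.
  move/esym/eqP; rewrite mulf_eq0 oppr_eq0 (negbTE yn0) /= mulr1 addrC subr_eq0 => /eqP ht.
  exists S; split=> //; apply: (@intr_inj rat).
  by rewrite ht /Z mulrz_sumr.
move=> [S [cS sS]].
pose d j := \prod_(i in S :\ j) (Z j - Z i).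
have dn0 : forall j, d j != 0.
  move=> j; apply/prodf_neq0 => i; rewrite in_setD1 => /andP[ij _].
  by rewrite subr_eq0; apply/eqP => /hZ /eqP; rewrite eq_sym (negbTE ij).
pose X : 'cV[rat]_n := \col_j (if j \in S then (d j)^-1 else 0).
pose v : 'cV[rat]_(n + 1) := col_mx X (const_mx (-1)).
have vu : forall j, v (lshift 1 j) 0 = X j 0 by move=> j; rewrite col_mxEu.
have vd : v (rshift n ord0) 0 = -1 by rewrite col_mxEd mxE.
have sumE : forall m, \sum_(j < n) Z j ^+ m * v (lshift 1 j) 0 = \sum_(j in S) Z j ^+ m / d j.
  move=> m; rewrite [RHS]big_mkcond; apply: eq_bigr => j _; rewrite vu mxE.
  by case: ifP => _; rewrite ?mulr0.
exists v; split.
- apply/eqP => /matrixP /(_ (rshift n ord0) 0); rewrite vd mxE => /eqP.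
  by rewrite oppr_eq0 oner_eq0.
- apply/matrixP => r c0; rewrite (ord1 c0) Mv_entry vd sumE mxE /=.
  have := ltn_ord r; rewrite ltnS leq_eqVlt => /orP[/eqP rk | rk].
    rewrite rk gtn_eqF // eqxx.
    pose q := \prod_(i in S) ('X - (Z i)%:P).
    pose p : {poly rat} := 'X^(k.+1) - q.
    have sp : (size p <= #|S|)%N.
      apply/leq_sizeP => j; rewrite cS => kj.
      rewrite coefB coefXn.
      have [->|jk] := eqVneq j k.+1.
        by have := lcS _ Z S; rewrite cS => ->; rewrite subrr.
      rewrite nth_default ?subr0 // size_prodS cS.
      by rewrite ltn_neqAle eq_sym jk kj.
    have := @lag _ _ hZ _ _ sp; rewrite cS /=.
    rewrite /p coefB coefXn ltn_eqF //= mulr0n sub0r.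
    have := coefS _ Z S; rewrite cS => /(_ isT) /= ->.
    rewrite opprK => H.
    transitivity (t%:~R - t%:~R : rat); last by rewrite subrr.
    rewrite mulrN1; congr (_ - _).
    rewrite -sS [RHS]mulrz_sumr -/Z H.
    apply: eq_bigr => j jS; rewrite hornerD hornerN hornerXn horner_prod.
    by rewrite (bigD1 j) //= hornerXsubC subrr mul0r oppr0 addr0.
  rewrite (ltn_eqF rk).
  have sp : (size ('X^r : {poly rat}) <= #|S|)%N by rewrite size_polyXn cS.
  have := @lag _ _ hZ _ _ sp; rewrite cS /= coefXn.
  under eq_bigr => j _ do rewrite hornerXn.
  move=> <-.
  by rewrite eq_sym; case: (_ == _); rewrite /=; ring.
- rewrite weightE vd oppr_eq0 oner_eq0 /=.
  have -> : [set j : 'I_n | v (lshift 1 j) 0 != 0] = S.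
    apply/setP => j; rewrite !inE vu mxE; case: ifP => // _.
    by rewrite invr_eq0 dn0.
  by rewrite cS addn1.
Qed.
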